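(* Let $h=h_{\bar 0}\oplus h_{\bar 1}$, $J$, $P$, $q$ and $\tilde h=Ph$ be as described in the context. Let ${\cal A}_{SSR}$ be the self-dual canonical super commutation relations algebra over $h$ and ${\cal A}_{CSR}$ the canonical super commutation relations algebra over $\tilde h$, both as defined in the context. Then ${\cal A}_{SSR}$ and ${\cal A}_{CSR}$ are $\ast$-isomorphic.
   Context: $h_{\bar 0}$ (boson space) and $h_{\bar 1}$ (fermion space) are complex, infinite-dimensional, separable Hilbert spaces and $h=h_{\bar 0}\oplus h_{\bar 1}$ with scalar product $(\cdot,\cdot)$ (antilinear in the first argument). $P_\alpha$ ($\alpha\in\{\bar 0,\bar 1\}={\bf Z}_2$) is the orthogonal projection onto $h_\alpha$ and $\gamma=P_{\bar 0}-P_{\bar 1}$. A vector $f\in h_\alpha$ is homogeneous of degree $\mathrm{deg}(f)=\alpha$. For homogeneous elements $v,w$ of a ${\bf Z}_2$-graded algebra, $\langle v,w\rangle=\mathrm{deg}(v)\cdot\mathrm{deg}(w)$ and the supercommutator is $[v,w]_s=vw-(-1)^{\langle v,w\rangle}wv$, extended bilinearly. $J$ is an even conjugation on $h$ (antilinear, norm-preserving, $J^2=1$, $J\gamma=\gamma J$). $P$ is an orthogonal projection on $h$ commuting with $\gamma$ and satisfying $JP=(1-P)J$. Put $q=P-\gamma(1-P)$ and $\tilde h=Ph$ (a graded Hilbert space with $\tilde h_\alpha=P_\alpha\tilde h$); $\ast$ on vectors/operators denotes the Hilbert adjoint. ${\cal A}_{SSR}$ is the complex $\ast$-algebra generated by an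 identity ${\bf 1}$ and symbols $B^\dagger(f),B(f)$, $f\in h$, subject to the relations: $B^\dagger(c_1f_1+c_2f_2)=c_1B^\dagger(f_1)+c_2B^\dagger(f_2)$; $B^\dagger(f)=B(qf)^\ast$; $[B(f_1),B^\dagger(f_2)]_s=(f_1,f_2){\bf 1}$; $B(f)=B^\dagger(qJf)$; with grading $\mathrm{deg}(B^\dagger(f))=\mathrm{deg}(f)$ for homogeneous $f$. ${\cal A}_{CSR}$ is the complex $\ast$-algebra generated by an identity ${\bf 1}$ and symbols $a^\dagger(\tilde f),a(\tilde f)$, $\tilde f\in\tilde h$, subject to: $a^\dagger(c_1\tilde f_1+c_2\tilde f_2)=c_1a^\dagger(\tilde f_1)+c_2a^\dagger(\tilde f_2)$; $a^\dagger(\tilde f)=a(\tilde f)^\ast$; $[a(\tilde f_1),a^\dagger(\tilde f_2)]_s=(\tilde f_1,\tilde f_2){\bf 1}$; $[a(\tilde f_1),a(\tilde f_2)]_s=0$; with $\mathrm{deg}(a^\dagger(\tilde f))=\mathrm{deg}(\tilde f)$ for homogeneous $\tilde f$. *)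

(* Defs.v *)
From HB Require Import structures.
From mathcomp Require Import all_boot all_order all_algebra.
From mathcomp Require Import reals.
From mathcomp Require Export complex.
Set Implicit Arguments. Unset Strict Implicit. Unset Printing Implicit Defensive.
Import Order.TTheory GRing.Theory Num.Theory.
Local Open Scope ring_scope.

Section Defs.
Variable R : realType.
Local Notation C := (R[i]).

Section Hilbert.
Variable H : lmodType C.
Variable ip : H -> H -> C.  (* scalar product, antilinear in 1st argument *)

Definition is_inner_product : Prop :=
  [/\ (forall f c g1 g2, ip f (c *: g1 + g2) = c * ip f g1 + ip f g2),
      (forall f g, ip g f = (ip f g)^*),
      (forall f, 0 <= ip f f) &
      (forall f, ip f f = 0 -> f = 0)].

Definition close (f g : H) (eps : C) : Prop := ip (f - g) (f - g) < eps.

Definition cauchy_seq (u : nat -> H) : Prop :=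
  forall eps : C, 0 < eps -> exists N, forall m n, (N <= m)%N -> (N <= n)%N ->
    close (u m) (u n) eps.

Definition converges_to (u : nat -> H) (l : H) : Prop :=
  forall eps : C, 0 < eps -> exists N, forall n, (N <= n)%N -> close (u n) l eps.

Definition complete_space : Prop :=
  forall u, cauchy_seq u -> exists l, converges_to u l.

Definition separable_sub (S : H -> Prop) : Prop :=
  exists d : nat -> H, (forall n, S (d n)) /\
    forall f, S f -> forall eps : C, 0 < eps -> exists n, close f (d n) eps.

Definition infinite_dim_sub (S : H -> Prop) : Prop :=
  forall n : nat, exists v : 'I_n -> H, (forall k, S (v k)) /\
    forall c : 'I_n -> C, \sum_(k < n) c k *: v k = 0 -> forall k, c k = 0.

Definition is_linear_map (T : H -> H) : Prop :=
  forall c f g, T (c *: f + g) = c *: T f + T g.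

Definition is_antilinear_map (T : H -> H) : Prop :=
  forall c f g, T (c *: f + g) = c^* *: T f + T g.

Definition is_orth_proj (T : H -> H) : Prop :=
  [/\ is_linear_map T, (forall f, T (T f) = T f) &
      (forall f g, ip (T f) g = ip f (T g))].

Variables (P0 J P : H -> H).
(* P0 = projection onto the boson space h_0; P_1 = 1 - P0 *)
Definition gamma (f : H) : H := P0 f - (f - P0 f).
Definition qop (f : H) : H := P f - gamma (f - P f).

(* homogeneous of degree b (false = 0bar, true = 1bar) *)
Definition homog (b : bool) (f : H) : Prop := P0 f = (if b then 0 else f).

Definition scr_setting : Prop :=
  [/\ is_inner_product /\ complete_space, is_orth_proj P0,
      infinite_dim_sub (homog false) /\ infinite_dim_sub (homog true),
      separable_sub (homog false) /\ separable_sub (homog true) /\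
      [/\ is_antilinear_map J, (forall f, ip (J f) (J f) = ip f f),
          (forall f, J (J f) = f) & (forall f, J (gamma f) = gamma (J f))] &
      [/\ is_orth_proj P, (forall f, P (gamma f) = gamma (P f)) &
          (forall f, J (P f) = J f - P (J f))]].

Definition tilde_h : Type := {f : H | P f = f}.
End Hilbert.

Section StarAlg.
Variable A : algType C.

Definition is_star (s : A -> A) : Prop :=
  [/\ (forall x y, s (x + y) = s x + s y),
      (forall (c : C) x, s (c *: x) = c^* *: s x),
      (forall x y, s (x * y) = s y * s x) &
      (forall x, s (s x) = x)].

Definition scomm (b1 b2 : bool) (x y : A) : A :=
  x * y - (-1) ^+ (b1 && b2) * (y * x).
End StarAlg.

Definition is_star_hom (A A' : algType C) (s : A -> A) (s' : A' -> A')
    (phi : A -> A') : Prop :=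
  [/\ (forall (c : C) x y, phi (c *: x + y) = c *: phi x + phi y),
      (forall x y, phi (x * y) = phi x * phi y),
      phi 1 = 1 &
      (forall x, phi (s x) = s' (phi x))].

Section SSR.
Variables (H : lmodType C) (ip : H -> H -> C) (P0 J P : H -> H).

Definition SSR_rels (A : algType C) (s : A -> A) (Bd B : H -> A) : Prop :=
  [/\ (forall (c1 c2 : C) f1 f2, Bd (c1 *: f1 + c2 *: f2) = c1 *: Bd f1 + c2 *: Bd f2),
      (forall f, Bd f = s (B (qop P0 P f))),
      (forall b1 b2 f1 f2, homog P0 b1 f1 -> homog P0 b2 f2 ->
          scomm b1 b2 (B f1) (Bd f2) = ip f1 f2 *: 1) &
      (forall f, B f = Bd (qop P0 P (J f)))].

(* A (with star s and generators B^dagger = Bd, B) is the complex *-algebra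
   generated by the symbols subject to the relations: universal property. *)
Definition is_A_SSR (A : algType C) (s : A -> A) (Bd B : H -> A) : Prop :=
  [/\ is_star s, SSR_rels s Bd B &
      forall (A' : algType C) (s' : A' -> A') (Bd' B' : H -> A'),
        is_star s' -> SSR_rels s' Bd' B' ->
        exists phi : A -> A',
          [/\ is_star_hom s s' phi, (forall f, phi (Bd f) = Bd' f),
              (forall f, phi (B f) = B' f) &
              forall psi : A -> A', is_star_hom s s' psi ->
                (forall f, psi (Bd f) = Bd' f) -> (forall f, psi (B f) = B' f) ->
                forall x, psi x = phi x]].
End SSR.

Section CSR.
Variables (H : lmodType C) (ip : H -> H -> C) (P0 P : H -> H).
Local Notation th := (tilde_h P).

Definition CSR_rels (A : algType C) (s : A -> A) (ad a : th -> A) : Prop :=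
  [/\ (forall (c1 c2 : C) (g1 g2 g : th), sval g = c1 *: sval g1 + c2 *: sval g2 ->
          ad g = c1 *: ad g1 + c2 *: ad g2),
      (forall g, ad g = s (a g)),
      (forall b1 b2 (g1 g2 : th), homog P0 b1 (sval g1) -> homog P0 b2 (sval g2) ->
          scomm b1 b2 (a g1) (ad g2) = ip (sval g1) (sval g2) *: 1) &
      (forall b1 b2 (g1 g2 : th), homog P0 b1 (sval g1) -> homog P0 b2 (sval g2) ->
          scomm b1 b2 (a g1) (a g2) = 0)].

Definition is_A_CSR (A : algType C) (s : A -> A) (ad a : th -> A) : Prop :=
  [/\ is_star s, CSR_rels s ad a &
      forall (A' : algType C) (s' : A' -> A') (ad' a' : th -> A'),
        is_star s' -> CSR_rels s' ad' a' ->
        exists phi : A -> A',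
          [/\ is_star_hom s s' phi, (forall g, phi (ad g) = ad' g),
              (forall g, phi (a g) = a' g) &
              forall psi : A -> A', is_star_hom s s' psi ->
                (forall g, psi (ad g) = ad' g) -> (forall g, psi (a g) = a' g) ->
                forall x, psi x = phi x]].
End CSR.
End Defs.

(* Main.v *)
Require Import Defs.
From HB Require Import structures.
From mathcomp Require Import all_boot all_order all_algebra.
From mathcomp Require Import reals complex.
From mathcomp Require Import ring.
Import Order.TTheory GRing.Theory Num.Theory.
Local Open Scope ring_scope.

Module Helpers.
Set Implicit Arguments. Unset Strict Implicit.


Section Lin.
Variable R : realType.
Variable H : lmodType R[i].
Variable T : H -> H.

Lemma lin0 : is_linear_map T -> T 0 = 0.
Proof. move=> hT; have := hT 1 0 0; rewrite !scale1r addr0 => /(congr1 (fun x => x - T 0)).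
by rewrite addrK subrr => <-. Qed.
Lemma linD : is_linear_map T -> forall f g, T (f + g) = T f + T g.
Proof. by move=> hT f g; rewrite -{1}[f]scale1r (hT 1 f g) scale1r. Qed.
Lemma linZ : is_linear_map T -> forall c f, T (c *: f) = c *: T f.
Proof. by move=> hT c f; rewrite -[c *: f]addr0 (hT c f 0) (lin0 hT) addr0. Qed.
Lemma linN : is_linear_map T -> forall f, T (- f) = - T f.
Proof. by move=> hT f; rewrite -scaleN1r (linZ hT) scaleN1r. Qed.
Lemma linB : is_linear_map T -> forall f g, T (f - g) = T f - T g.
Proof. by move=> hT f g; rewrite (linD hT) (linN hT). Qed.

Lemma alin0 : is_antilinear_map T -> T 0 = 0.
Proof. move=> hT; have := hT 1 0 0; rewrite scale1r addr0 rmorph1 scale1r => /(congr1 (fun x => x - T 0)).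
by rewrite addrK subrr => <-. Qed.
Lemma alinD : is_antilinear_map T -> forall f g, T (f + g) = T f + T g.
Proof. by move=> hT f g; rewrite -{1}[f]scale1r (hT 1 f g) rmorph1 scale1r. Qed.
Lemma alinZ : is_antilinear_map T -> forall c f, T (c *: f) = c^* *: T f.
Proof. by move=> hT c f; rewrite -[c *: f]addr0 (hT c f 0) (alin0 hT) addr0. Qed.
Lemma alinN : is_antilinear_map T -> forall f, T (- f) = - T f.
Proof. by move=> hT f; rewrite -scaleN1r (alinZ hT) rmorphN1 scaleN1r. Qed.
Lemma alinB : is_antilinear_map T -> forall f g, T (f - g) = T f - T g.
Proof. by move=> hT f g; rewrite (alinD hT) (alinN hT). Qed.
Lemma linMn : is_linear_map T -> forall f n, T (f *+ n) = T f *+ n.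
Proof. by move=> hT f n; rewrite -[f *+ n]scaler_nat -[T f *+ n]scaler_nat (linZ hT). Qed.
Lemma alinMn : is_antilinear_map T -> forall f n, T (f *+ n) = T f *+ n.
Proof. by move=> hT f n; rewrite -[f *+ n]scaler_nat -[T f *+ n]scaler_nat (alinZ hT) rmorph_nat. Qed.
Lemma mulr2nI (x y : H) : x *+ 2 = y *+ 2 -> x = y.
Proof.
move/(congr1 (fun z => 2^-1 *: z)); rewrite -[x *+ 2]scaler_nat -[y *+ 2]scaler_nat !scalerA mulVf ?scale1r //.
by rewrite pnatr_eq0.
Qed.
End Lin.


Section StarLem.
Variables (R : realType) (A : algType R[i]).

Lemma scommDl b1 b2 (x1 x2 y : A) :
  scomm b1 b2 (x1 + x2) y = scomm b1 b2 x1 y + scomm b1 b2 x2 y.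
Proof. by rewrite /scomm mulrDl mulrDr mulrDr opprD addrACA. Qed.
Lemma scommDr b1 b2 (x y1 y2 : A) :
  scomm b1 b2 x (y1 + y2) = scomm b1 b2 x y1 + scomm b1 b2 x y2.
Proof. by rewrite /scomm mulrDr mulrDl mulrDr opprD addrACA. Qed.
Lemma scommNr b1 b2 (x y : A) : scomm b1 b2 x (- y) = - scomm b1 b2 x y.
Proof. by rewrite /scomm mulrN mulNr mulrN opprD !opprK. Qed.
Lemma scommBr b1 b2 (x y1 y2 : A) :
  scomm b1 b2 x (y1 - y2) = scomm b1 b2 x y1 - scomm b1 b2 x y2.
Proof. by rewrite scommDr scommNr. Qed.
Lemma scommC b1 b2 (x y : A) : scomm b1 b2 x y = scomm b2 b1 x y.
Proof. by rewrite /scomm andbC. Qed.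
Lemma scomm_swap b1 b2 (x y : A) :
  scomm b1 b2 y x = - ((-1) ^+ (b1 && b2)) * scomm b2 b1 x y.
Proof.
rewrite /scomm andbC; case: (b2 && b1) => /=.
  by rewrite expr1 opprK mul1r !mulN1r !opprK addrC.
by rewrite expr0 !mul1r mulN1r opprB.
Qed.

Variable s : A -> A.
Hypothesis st : is_star s.

Lemma s0 : s 0 = 0.
Proof. case: st => sD _ _ _; have := sD 0 0; rewrite addr0 => /(congr1 (fun x => x - s 0)).
by rewrite addrK subrr => <-. Qed.
Lemma sN x : s (- x) = - s x.
Proof. case: st => sD sZ _ _; by rewrite -scaleN1r sZ rmorphN1 scaleN1r. Qed.
Lemma sB x y : s (x - y) = s x - s y.
Proof. case: st => sD _ _ _; by rewrite sD sN. Qed.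
Lemma s_scomm b1 b2 x y : s (scomm b1 b2 x y) = scomm b1 b2 (s y) (s x).
Proof.
case: st => sD sZ sM sK; rewrite /scomm; case: (b1 && b2) => /=.
  by rewrite expr1 !mulN1r !opprK sD !sM.
by rewrite expr0 !mul1r sB !sM.
Qed.
End StarLem.

Lemma star_hom_comp (R : realType) (A1 A2 A3 : algType R[i]) (s1 : A1 -> A1)
  (s2 : A2 -> A2) (s3 : A3 -> A3) (f : A1 -> A2) (g : A2 -> A3) :
  is_star_hom s1 s2 f -> is_star_hom s2 s3 g -> is_star_hom s1 s3 (g \o f).
Proof.
case=> fL fM f1 fs [gL gM g1 gs]; split => /=.
- by move=> c x y; rewrite fL gL.
- by move=> x y; rewrite fM gM.
- by rewrite f1 g1.
- by move=> x; rewrite fs gs.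
Qed.

Lemma star_hom_id (R : realType) (A1 : algType R[i]) (s1 : A1 -> A1) :
  is_star_hom s1 s1 id.
Proof. by split. Qed.


Section Hil.
Variables (R : realType) (H : lmodType R[i]) (ip : H -> H -> R[i]) (P0 J P : H -> H).
Hypothesis ipDZr : forall f c g1 g2, ip f (c *: g1 + g2) = c * ip f g1 + ip f g2.
Hypothesis ipC : forall f g, ip g f = (ip f g)^*.
Hypothesis P0L : is_linear_map P0.
Hypothesis P0id : forall f, P0 (P0 f) = P0 f.
Hypothesis P0sa : forall f g, ip (P0 f) g = ip f (P0 g).
Hypothesis JA : is_antilinear_map J.
Hypothesis Jn : forall f, ip (J f) (J f) = ip f f.
Hypothesis JJ : forall f, J (J f) = f.
Hypothesis Jg : forall f, J (gamma P0 f) = gamma P0 (J f).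
Hypothesis PL : is_linear_map P.
Hypothesis Pid : forall f, P (P f) = P f.
Hypothesis Psa : forall f g, ip (P f) g = ip f (P g).
Hypothesis Pg : forall f, P (gamma P0 f) = gamma P0 (P f).
Hypothesis JP : forall f, J (P f) = J f - P (J f).

Local Notation gm := (gamma P0).
Local Notation q := (qop P0 P).

Lemma ip0r f : ip f 0 = 0.
Proof. have := ipDZr f 1 0 0; rewrite scale1r addr0 mul1r => /(congr1 (fun x => x - ip f 0)).
by rewrite addrK subrr => <-. Qed.
Lemma ipDr f g1 g2 : ip f (g1 + g2) = ip f g1 + ip f g2.
Proof. by rewrite -{1}[g1]scale1r ipDZr mul1r. Qed.
Lemma ipZr f c g : ip f (c *: g) = c * ip f g.
Proof. by rewrite -[c *: g]addr0 ipDZr ip0r addr0. Qed.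
Lemma ipNr f g : ip f (- g) = - ip f g.
Proof. by rewrite -scaleN1r ipZr mulN1r. Qed.
Lemma ipBr f g1 g2 : ip f (g1 - g2) = ip f g1 - ip f g2.
Proof. by rewrite ipDr ipNr. Qed.
Lemma ip0l f : ip 0 f = 0.
Proof. by rewrite ipC ip0r rmorph0. Qed.
Lemma ipDl f g1 g2 : ip (g1 + g2) f = ip g1 f + ip g2 f.
Proof. by rewrite ipC ipDr rmorphD !(ipC f). Qed.
Lemma ipZl f c g : ip (c *: g) f = c^* * ip g f.
Proof. by rewrite ipC ipZr rmorphM (ipC f). Qed.
Lemma ipNl f g : ip (- g) f = - ip g f.
Proof. by rewrite ipC ipNr rmorphN (ipC f). Qed.
Lemma ipBl f g1 g2 : ip (g1 - g2) f = ip g1 f - ip g2 f.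
Proof. by rewrite ipDl ipNl. Qed.

Lemma ipJ x y : ip (J x) (J y) = ip y x.
Proof.
have E1 := Jn (x + y).
rewrite (alinD JA) !ipDl !ipDr !Jn in E1.
have E2 := Jn (x + 'i *: y).
rewrite (alinD JA) (alinZ JA) !ipDl !ipDr !ipZl !ipZr !Jn !conjCK !conjCi in E2.
set u := ip (J x) (J y) in E1 E2 *; set v := ip (J y) (J x) in E1 E2.
set p := ip x y in E1 E2; set r := ip y x in E1 E2 *.
set N1 := ip x x in E1 E2; set N2 := ip y y in E1 E2.
have e1 : u + v = p + r.
  apply/eqP; rewrite -subr_eq0; apply/eqP.
  have -> : u + v - (p + r) = (N1 + u + (v + N2)) - (N1 + p + (r + N2)) by ring.
  by rewrite E1 subrr.
have e2 : u - v = r - p.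
  apply/eqP; rewrite -subr_eq0; apply/eqP.
  have -> : u - v - (r - p) = 'i * ((N1 + - 'i * u + ('i * v + 'i * (- 'i * N2)))
     - (N1 + 'i * p + (- 'i * r + - 'i * ('i * N2)))) + ('i * 'i + 1) * (u - v + p - r) by ring.
  by rewrite E2 subrr mulr0 mulCii addNr mul0r addr0.
apply/eqP; rewrite -subr_eq0; apply/eqP.
have -> : u - r = 2^-1 * (((u+v) - (p+r)) + ((u - v) - (r - p))) by field.
by rewrite e1 e2 !subrr addr0 mulr0.
Qed.


Lemma gmE f : gm f = P0 f *+ 2 - f.
Proof. by rewrite /gamma opprB addrA -mulr2n. Qed.
Lemma gmL : is_linear_map gm.
Proof.
move=> c f g; rewrite !gmE P0L mulrnDl opprD scalerBr scalerMnr addrACA.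
by [].
Qed.
Lemma P0gm f : P0 (gm f) = P0 f.
Proof. by rewrite gmE (linB P0L) (linMn P0L) P0id mulr2n addrK. Qed.
Lemma gmP0 f : gm (P0 f) = P0 f.
Proof. by rewrite gmE P0id mulr2n addrK. Qed.
Lemma gmK f : gm (gm f) = f.
Proof. by rewrite [LHS]gmE P0gm gmE opprB subrKC. Qed.
Lemma PP0 f : P (P0 f) = P0 (P f).
Proof.
have := Pg f; rewrite !gmE (linB PL) (linMn PL) => /(congr1 (fun z => z + P f)).
by rewrite !subrK => /mulr2nI.
Qed.
Lemma JP0 f : J (P0 f) = P0 (J f).
Proof.
have := Jg f; rewrite !gmE (alinB JA) (alinMn JA) => /(congr1 (fun z => z + J f)).
by rewrite !subrK => /mulr2nI.
Qed.

Lemma homog_gm b f : homog P0 b f -> gm f = if b then - f else f.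
Proof. by rewrite /homog gmE => ->; case: b; rewrite ?mul0rn ?sub0r // mulr2n addrK. Qed.
Lemma homog_comm (T : H -> H) b f : (forall x, P0 (T x) = T (P0 x)) -> T 0 = 0 ->
  homog P0 b f -> homog P0 b (T f).
Proof. by rewrite /homog => hT T0 hf; rewrite hT hf; case: b hf. Qed.
Lemma homog_P b f : homog P0 b f -> homog P0 b (P f).
Proof. by apply: homog_comm; [move=> x; rewrite PP0 | exact: lin0]. Qed.
Lemma homog_J b f : homog P0 b f -> homog P0 b (J f).
Proof. by apply: homog_comm; [move=> x; rewrite JP0 | exact: alin0]. Qed.
Lemma homog_gm' b f : homog P0 b f -> homog P0 b (gm f).
Proof. by apply: homog_comm; [move=> x; rewrite P0gm gmP0 | exact: lin0 gmL]. Qed.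
Lemma homogB b f g : homog P0 b f -> homog P0 b g -> homog P0 b (f - g).
Proof. by rewrite /homog (linB P0L) => -> ->; case: b; rewrite ?subr0. Qed.
Lemma homog_q b f : homog P0 b f -> homog P0 b (q f).
Proof. by move=> h; rewrite /qop; apply: homogB; [exact: homog_P | apply: homog_gm'; apply: homogB => //; exact: homog_P]. Qed.

Lemma ipo b1 b2 x y : b1 != b2 -> homog P0 b1 x -> homog P0 b2 y -> ip x y = 0.
Proof.
rewrite /homog; case: b1; case: b2 => // _ hx hy.
  by rewrite -hy -P0sa hx ip0l.
by rewrite -hx P0sa hy ip0r.
Qed.

Lemma ipdec f1 f2 : ip f1 f2 = ip (P f1) (P f2) + ip (f1 - P f1) (f2 - P f2).
Proof. by rewrite !ipBl !ipBr !Psa !Pid; ring. Qed.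

Lemma PJ f : P (J f) = J (f - P f).
Proof. by rewrite (alinB JA) JP opprB subrKC. Qed.
Lemma PJP f : P (J (P f)) = 0.
Proof. by rewrite PJ Pid subrr (alin0 JA). Qed.
Lemma Pq f : P (q f) = P f.
Proof. by rewrite /qop (linB PL) Pg (linB PL) Pid subrr (lin0 gmL) subr0. Qed.
Lemma qq f : q (q f) = f.
Proof.
rewrite {1}/qop Pq.
have -> : q f - P f = - gm (f - P f) by rewrite /qop addrC addKr.
by rewrite (linN gmL) gmK opprK subrKC.
Qed.
Lemma PJq f : P (J (q f)) = - P (gm (J f)).
Proof. by rewrite /qop (alinB JA) Jg -PJ (linB PL) PJP Pg Pid sub0r Pg. Qed.
Lemma C2 f : P (gm (J (q (J f)))) = - P f.
Proof. by rewrite Pg PJq JJ Pg (linN gmL) gmK. Qed.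
Lemma C3 f : q (J (P (gm (J f)))) = - (f - P f).
Proof.
rewrite JP Jg JJ /qop (linB PL) Pid subrr subr0 sub0r.
by rewrite Pg -(linB gmL) gmK.
Qed.
Lemma PJg0 g : P g = g -> P (J g) = 0.
Proof. by move=> hg; rewrite -{1}hg PJP. Qed.
Lemma qfix x : P x = x -> q x = x.
Proof. by move=> hx; rewrite /qop hx subrr (lin0 gmL) subr0. Qed.

Lemma scal b1 b2 f1 f2 : homog P0 b1 f1 -> homog P0 b2 f2 ->
  ip f1 f2 = ip (P f1) (P f2) + (if b1 && b2 then -1 else 1) * ip (P (gm (J f2))) (P (J f1)).
Proof.
move=> h1 h2; rewrite (homog_gm (homog_J h2)).
have [e|ne] := eqVneq b1 b2.
  subst b2; rewrite andbb; case: b1 h1 h2 => h1 h2.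
    by rewrite (linN PL) ipNl mulN1r opprK !PJ ipJ -ipdec.
  by rewrite mul1r !PJ ipJ -ipdec.
have ne' : b2 != b1 by rewrite eq_sym.
rewrite (ipo ne h1 h2) (ipo ne (homog_P h1) (homog_P h2)).
have hk : homog P0 b2 (P (if b2 then - J f2 else J f2)).
  by apply: homog_P; case: b2 h2 {ne ne'} => h2; [rewrite -(homog_gm (homog_J h2)); apply: homog_gm'|]; apply: homog_J.
by rewrite (ipo ne' hk (homog_P (homog_J h1))) mulr0 addr0.
Qed.

Definition thP (x : H) : tilde_h P := exist (fun f => P f = f) (P x) (Pid x).

Lemma th_eq (g1 g2 : tilde_h P) : sval g1 = sval g2 -> g1 = g2.
Proof.
case: g1 g2 => x1 h1 [x2 h2] /= e; subst x2; congr exist; exact: eq_irrelevance.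
Qed.
Lemma thP_eq x y : P x = P y -> thP x = thP y.
Proof. by move=> e; apply: th_eq. Qed.

Section A2.
Variables (A2 : algType R[i]) (s2 : A2 -> A2) (ad a : tilde_h P -> A2).
Hypothesis st2 : is_star s2.
Hypothesis rl2 : CSR_rels ip P0 s2 ad a.

Lemma a_s g : a g = s2 (ad g).
Proof. by case: rl2 => _ ads _ _; case: st2 => _ _ _ sK; rewrite ads sK. Qed.
Lemma ad_lin c1 c2 x y : ad (thP (c1 *: x + c2 *: y)) = c1 *: ad (thP x) + c2 *: ad (thP y).
Proof. by case: rl2 => adL _ _ _; apply: adL; rewrite /= (linD PL) !(linZ PL). Qed.
Lemma a_lin c1 c2 x y : a (thP (c1 *: x + c2 *: y)) = c1^* *: a (thP x) + c2^* *: a (thP y).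
Proof. by case: st2 => sD sZ _ _; rewrite !a_s ad_lin sD !sZ. Qed.
Lemma ad_N x y : P x = - P y -> ad (thP x) = - ad (thP y).
Proof.
case: rl2 => adL _ _ _ e.
by rewrite (adL (-1) 0 (thP y) (thP y)) /= ?scaleN1r ?scale0r ?addr0.
Qed.
Lemma a_N x y : P x = - P y -> a (thP x) = - a (thP y).
Proof. by move=> e; rewrite !a_s (ad_N e) (sN st2). Qed.
Lemma a_0 x : P x = 0 -> a (thP x) = 0.
Proof.
case: rl2 => adL _ _ _ e.
rewrite a_s (adL 0 0 (thP x) (thP x)) /= ?scale0r ?addr0 ?(s0 st2) //.
Qed.

Definition Bd2 f := ad (thP f) - a (thP (gm (J f))).
Definition B2 f := a (thP f) + ad (thP (J f)).

Lemma SSR2 : SSR_rels ip P0 J P s2 Bd2 B2.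
Proof.
case: rl2 => adL ads aad aa; case: (st2) => sD sZ sM sK; split.
- move=> c1 c2 f1 f2; rewrite /Bd2 (alinD JA) !(alinZ JA) (linD gmL) !(linZ gmL).
  by rewrite ad_lin a_lin !conjCK !scalerBr opprD addrACA.
- move=> f; rewrite /B2 /Bd2 sD -ads -a_s (thP_eq (Pq f)).
  by rewrite (@a_N (J (q f)) (gm (J f))) ?PJq.
- move=> b1 b2 f1 f2 h1 h2; rewrite /B2 /Bd2 scommDl !scommBr.
  have hp1 : homog P0 b1 (sval (thP f1)) by exact: homog_P.
  have hj1 : homog P0 b1 (sval (thP (J f1))) by apply: homog_P; exact: homog_J.
  have hp2 : homog P0 b2 (sval (thP f2)) by exact: homog_P.
  have hk2 : homog P0 b2 (sval (thP (gm (J f2)))).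
    by apply: homog_P; apply: homog_gm'; exact: homog_J.
  rewrite (aad b1 b2 _ _ hp1 hp2) (aa b1 b2 _ _ hp1 hk2).
  rewrite [scomm _ _ (ad _) (ad _)]scommC !ads -s_scomm // (aa b2 b1 _ _ hp2 hj1) (s0 st2).
  rewrite -ads scomm_swap (aad b2 b1 _ _ hk2 hj1) /= (scal h1 h2).
  case: (b1 && b2) => /=.
    by rewrite expr1 subr0 sub0r opprK mul1r mulN1r scalerDl scaleNr.
  by rewrite expr0 subr0 sub0r mulN1r opprK mul1r scalerDl.
- move=> f; rewrite /B2 /Bd2 (thP_eq (Pq (J f))).
  by rewrite (@a_N (gm (J (q (J f)))) f) ?C2 // opprK addrC.
Qed.
End A2.

Section A1.
Variables (A1 : algType R[i]) (s1 : A1 -> A1) (Bd B : H -> A1).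
Hypothesis st1 : is_star s1.
Hypothesis rl1 : SSR_rels ip P0 J P s1 Bd B.

Definition ad1 (g : tilde_h P) := Bd (sval g).
Definition a1 (g : tilde_h P) := B (sval g).

Lemma CSR1 : CSR_rels ip P0 s1 ad1 a1.
Proof.
case: rl1 => BdL Bds BB BqJ; split.
- by move=> c1 c2 g1 g2 g e; rewrite /ad1 e BdL.
- by move=> g; rewrite /ad1 /a1 Bds qfix //; exact: (proj2_sig g).
- by move=> b1 b2 g1 g2 h1 h2; exact: BB.
- move=> b1 b2 g1 g2 h1 h2; rewrite /a1 [B (sval g2)]BqJ.
  rewrite (BB b1 b2 _ _ h1 (homog_q (homog_J h2))).
  by rewrite -(proj2_sig g1) Psa Pq (PJg0 (proj2_sig g2)) ip0r scale0r.
Qed.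

Lemma B_from_Bd (chi : A1 -> A1) : is_star_hom s1 s1 chi ->
  (forall f, chi (Bd f) = Bd f) -> forall f, chi (B f) = B f.
Proof.
case: rl1 => BdL Bds BB BqJ; case: st1 => sD sZ sM sK.
case=> _ _ _ chis e f.
have -> : B f = s1 (Bd (q f)) by rewrite Bds qq sK.
by rewrite chis e.
Qed.
End A1.

Lemma main (A1 : algType R[i]) (s1 : A1 -> A1) (Bd B : H -> A1)
    (hA1 : is_A_SSR ip P0 J P s1 Bd B)
    (A2 : algType R[i]) (s2 : A2 -> A2) (ad a : tilde_h P -> A2)
    (hA2 : is_A_CSR ip P0 s2 ad a) :
  exists phi : A1 -> A2, is_star_hom s1 s2 phi /\ bijective phi.
Proof.
case: hA1 => st1 rl1 U1; case: hA2 => st2 rl2 U2.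
have [phi [phiH phiBd phiB _]] := U1 A2 s2 (Bd2 ad a) (B2 ad a) st2 (SSR2 st2 rl2).
have [psi [psiH psiad psia _]] := U2 A1 s1 (ad1 Bd) (a1 B) st1 (CSR1 rl1).
exists phi; split => //.
apply: (@Bijective _ _ phi psi).
- move=> x.
  have [phi0 [_ _ _ uniq]] := U1 A1 s1 Bd B st1 rl1.
  have hc := star_hom_comp phiH psiH.
  have eBd : forall f, (psi \o phi) (Bd f) = Bd f.
    move=> f; rewrite /= phiBd /Bd2.
    case: psiH => psiL _ _ _.
    have -> : ad (thP f) - a (thP (gm (J f))) = (-1) *: a (thP (gm (J f))) + ad (thP f).
      by rewrite scaleN1r addrC.
    rewrite psiL psiad psia /ad1 /a1 /= scaleN1r.
    case: rl1 => BdL Bds BB BqJ.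
    rewrite BqJ C3.
    have BdN : forall y, Bd (- y) = - Bd y.
      by move=> y; have := BdL (-1) 0 y y; rewrite !scaleN1r !scale0r !addr0.
    have BdD : forall y z, Bd (y + z) = Bd y + Bd z.
      by move=> y z; have := BdL 1 1 y z; rewrite !scale1r.
    by rewrite BdN opprK -BdD subrK.
  have eB := B_from_Bd st1 rl1 hc eBd.
  have e1 := uniq _ hc eBd eB x.
  have e2 := uniq _ (star_hom_id s1) (fun f => erefl) (fun f => erefl) x.
  exact: (etrans e1 (esym e2)).
- move=> y.
  have [phi0 [_ _ _ uniq]] := U2 A2 s2 ad a st2 rl2.
  have hc := star_hom_comp psiH phiH.
  have ead : forall g, (phi \o psi) (ad g) = ad g.
    move=> g; rewrite /= psiad /ad1 phiBd /Bd2 (a_0 st2 rl2) ?subr0.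
      by congr ad; apply: th_eq; rewrite /= (proj2_sig g).
    by rewrite Pg (PJg0 (proj2_sig g)) (lin0 gmL).
  have ea : forall g, (phi \o psi) (a g) = a g.
    move=> g; case: hc => _ _ _ chis.
    by rewrite (a_s st2 rl2) chis ead.
  have e1 := uniq _ hc ead ea y.
  have e2 := uniq _ (star_hom_id s2) (fun f => erefl) (fun f => erefl) y.
  exact: (etrans e1 (esym e2)).
Qed.

End Hil.

End Helpers.
Import Helpers.

Theorem lemma1 (R : realType) (H : lmodType R[i]) (ip : H -> H -> R[i])
    (P0 J P : H -> H) (hset : scr_setting ip P0 J P)
    (A1 : algType R[i]) (s1 : A1 -> A1) (Bd B : H -> A1)
    (hA1 : is_A_SSR ip P0 J P s1 Bd B)
    (A2 : algType R[i]) (s2 : A2 -> A2) (ad a : tilde_h P -> A2)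
    (hA2 : is_A_CSR ip P0 s2 ad a) :
  exists phi : A1 -> A2, is_star_hom s1 s2 phi /\ bijective phi.
Proof.
case: hset => [[[ipDZr ipC _ _] _] [P0L P0id P0sa] _ [_ [_ [JA Jn JJ Jg]]] [[PL Pid Psa] Pg JP]].
exact: (main ipDZr ipC P0L P0id P0sa JA Jn JJ Jg PL Pid Psa Pg JP hA1 hA2).
Qed.
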